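(* Let $t<n$, let $\mathcal{E}$ be an information exchange and $P$ a decision protocol for the hard crash context $(\mathcal{E},\mathit{Crash}_t)$ such that SBA($\mathcal{N}$) is valid in $\mathcal{I}_{P,\mathcal{E},\mathit{Crash}_t}$. Then for every agent $i$ and value $v$, the formulas $C_{\mathcal{A}}(\mathtt{decides}_{\mathcal{A}}(v))\Leftrightarrow CB_{\mathcal{N}}(\mathtt{decides}_{\mathcal{N}}(v))$ and $i\in\mathcal{A}\Rightarrow\big(K_i C_{\mathcal{A}}(\mathtt{decides}_{\mathcal{A}}(v))\Leftrightarrow B^{\mathcal{N}}_i CB_{\mathcal{N}}(\mathtt{decides}_{\mathcal{N}}(v))\big)$ are valid in $\mathcal{I}_{P,\mathcal{E},\mathit{Crash}_t}$.
   Context: Agents $\mathrm{Agt}=\{1,\dots,n\}$; decision values $V$; actions $A_i=\{\mathtt{noop}\}\cup\{\mathtt{decide}_i(v):v\in V\}$. An information exchange $\mathcal{E}$ gives each agent $i$ a tuple $(L_i,I_i,M_i,\mu_i,\delta_i)$: local states $L_i$ of the form $\langle\mathit{init}_i,\mathit{time}_i,\dots\rangle$ ($\mathit{init}_i\in V$ the initial preference) together with a distinguished state $\mathit{crashed}$; initial states $I_i$; messages $M_i\ni\bot$; $\mu_i:L_i\times A_i\to(\mathrm{Agt}\to M_i)$; $\delta_i:L_i\times A_i\times\prod_jM_j\to L_i$ (preserving $\mathit{init}_i$, incrementing $\mathit{time}_i$). A decision protocol is $P=(P_i:L_i\to A_i)_i$; in the hard crash model $P_i(\mathit{crashed})=\mathtt{noop}$.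 A failure model $(L^*_e,I_e,\delta_e,\mathit{Adv})$ has environment states, initial ones, update $\delta_e:L^*_e\times\prod_iA_i\to L^*_e$, adversaries $(\Delta^t,\Delta^r,\Delta^s)$, $\Delta^t,\Delta^r:\mathbb{N}\times\mathrm{Agt}\times\mathrm{Agt}\times\bigcup_iM_i\to\bigcup_iM_i$, $\Delta^s_i:\mathbb{N}\times L_i\to L_i$. Runs $r$ of $\mathcal{I}_{P,\mathcal{E},\mathcal{F}}$: $r(0)=((s_e,\alpha),s_1,\dots,s_n)$ with $s_e\in I_e,\alpha\in\mathit{Adv},s_i\in I_i$; from $r(k)=((s_e,\alpha),s_1,\dots,s_n)$, $r(k+1)=((\delta_e(s_e,(a_1,\dots,a_n)),\alpha),s'_1,\dots,s'_n)$ with $a_i=P_i(s_i)$, $m_{i,j}=\mu_i(s_i,a_i)(j)$, $m'_{i,j}=\Delta^r(k,i,j,\Delta^t(k,i,j,m_{i,j}))$, $s^*_j=\delta_j(s_j,a_j,(m'_{1,j},\dots,m'_{n,j}))$, $s'_j=\Delta^s_j(k,s^*_j)$. $\mathit{Crash}_t$: adversaries in which at most $t$ agents crash; $\Delta^r(k,i,j,m)=m$ always; an agent $i$ crashing in round $k+1$ has $\Delta^s_i(k',s)=\mathit{crashed}$ for all $s$ and $k'\ge k$, some $J\subseteq\mathrm{Agt}$ with $\Delta^t(k,i,j,m)=\bot$ for $j\in J$ and $=m$ otherwise, and $\Delta^t(k',i,j,m)=\bot$ for all $j$ and $k'>k$; otherwise $\Delta^s_i$ and $\Delta^t(\cdot,i,\cdot,\cdot)$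 act as identity. An agent has a fault in a round if its sent messages are altered, its received messages altered, or its updated state altered. $\mathcal{N}(r,m)$ = agents with no fault in any round of $r$; $\mathcal{A}(r,m)$ = agents with no fault in rounds $1..m$. $\mathtt{decides}_i(v)$ holds at $(r,m)$ iff $P_i(r_i(m))=\mathtt{decide}_i(v)$; $\mathtt{decides}_S(v):=\bigwedge_{i\in S}\mathtt{decides}_i(v)$. $(r,m)\sim_i(r',m')$ iff $r_i(m)=r'_i(m')$; $K_i\phi$ holds iff $\phi$ holds at all $\sim_i$-related points. For an indexical set $S$: $B^S_i\phi:=K_i(i\in S\Rightarrow\phi)$, $E^B_S\phi:=\bigwedge_{i\in S}B^S_i\phi$, $E_S\phi:=\bigwedge_{i\in S}K_i\phi$, $CB_S\phi:=\bigwedge_{k\ge1}(E^B_S)^k\phi$, $C_S\phi:=\bigwedge_{k\ge1}E_S^k\phi$. SBA($\mathcal{N}$) valid means in every run: each agent decides at most once; if $i\in\mathcal{N}(r,m)$ performs $\mathtt{decide}_i(v)$ at time $m$ then every $j\in\mathcal{N}(r,m)$ performs $\mathtt{decide}_j(v)$ at time $m$; and then some agent has initial preference $v$. *)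

(* Defs.v *)
From mathcomp Require Import all_boot.

(* Actions A_i = {noop} U {decide_i(v) : v in V}; the agent index is implicit. *)
Inductive action (V : Type) : Type :=
  | noop : action V
  | decide : V -> action V.
Arguments noop {V}.
Arguments decide {V} _.

(* All agents' local states live in one type [lst] (agent-indexed functions
   select the relevant components), and all messages in one type [msg]
   (playing the role of the union of the M_i). *)
Record InfoExchange (n : nat) (V : Type) := {
  lst : Type;
  msg : Type;
  bot : msg;
  crashed : lst;
  init : 'I_n -> lst -> V;
  time : 'I_n -> lst -> nat;
  initial : 'I_n -> lst -> Prop;
  mu : 'I_n -> lst -> action V -> ('I_n -> msg);
  delta : 'I_n -> lst -> action V -> ('I_n -> msg) -> lst;
  initial_ok : forall i s, initial i s -> s <> crashed /\ time i s = 0;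
  delta_ok : forall i s a ms, s <> crashed ->
    [/\ delta i s a ms <> crashed,
        init i (delta i s a ms) = init i s &
        time i (delta i s a ms) = (time i s).+1]
}.
Arguments lst {n V}. Arguments msg {n V}. Arguments bot {n V}.
Arguments crashed {n V}. Arguments init {n V}. Arguments time {n V}.
Arguments initial {n V}. Arguments mu {n V}. Arguments delta {n V}.

Record adversary (n : nat) (M L : Type) := {
  dt : nat -> 'I_n -> 'I_n -> M -> M;
  dr : nat -> 'I_n -> 'I_n -> M -> M;
  ds : 'I_n -> nat -> L -> L
}.
Arguments dt {n M L}. Arguments dr {n M L}. Arguments ds {n M L}.

Section System.
Variables (n t : nat) (V : Type) (E : InfoExchange n V)
          (P : 'I_n -> lst E -> action V)
          (Le : Type) (Ie : Le -> Prop) (de : Le -> ('I_n -> action V) -> Le).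

Definition adv := adversary n (msg E) (lst E).

Definition crash_adv (a : adv) : Prop :=
  (forall k i j m, dr a k i j m = m) /\
  exists C : {set 'I_n}, #|C| <= t /\
    forall i, if i \in C then
      exists (k : nat) (J : {set 'I_n}),
        [/\ forall k' s, k' < k -> ds a i k' s = s,
            forall k' s, k <= k' -> ds a i k' s = crashed E,
            forall k' j m, k' < k -> dt a k' i j m = m,
            forall j m, dt a k i j m = (if j \in J then bot E else m) &
            forall k' j m, k < k' -> dt a k' i j m = bot E]
    else (forall k s, ds a i k s = s) /\ (forall k j m, dt a k i j m = m).

Definition gstate := ((Le * adv) * ('I_n -> lst E))%type.

Definition acts (g : gstate) (j : 'I_n) : action V := P j (g.2 j).
Definition sent (g : gstate) (i j : 'I_n) : msg E := mu E i (g.2 i) (acts g i) j.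
Definition recv (k : nat) (g : gstate) (i j : 'I_n) : msg E :=
  dr g.1.2 k i j (dt g.1.2 k i j (sent g i j)).
Definition sstar (k : nat) (g : gstate) (j : 'I_n) : lst E :=
  delta E j (g.2 j) (acts g j) (fun i => recv k g i j).

Definition step (k : nat) (g : gstate) : gstate :=
  ((de g.1.1 (acts g), g.1.2), fun j => ds g.1.2 j k (sstar k g j)).

Definition run := nat -> gstate.

Definition is_run (r : run) : Prop :=
  [/\ Ie (r 0).1.1, crash_adv (r 0).1.2,
      (forall i, initial E i ((r 0).2 i)) &
      forall k, r k.+1 = step k (r k)].

(* Agent i has a fault in round k+1 of r. *)
Definition fault (r : run) (k : nat) (i : 'I_n) : Prop :=
  let g := r k in let a := g.1.2 in
  (exists j, dt a k i j (sent g i j) <> sent g i j) \/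
  (exists j, dr a k j i (dt a k j i (sent g j i)) <> dt a k j i (sent g j i)) \/
  (ds a i k (sstar k g i) <> sstar k g i).

Definition point := (run * nat)%type.
Definition formula := point -> Prop.
Definition indexical := point -> 'I_n -> Prop.

Definition valid (phi : formula) : Prop := forall r m, is_run r -> phi (r, m).

Definition lstate (i : 'I_n) (p : point) : lst E := (p.1 p.2).2 i.

Definition Nset : indexical := fun p i => forall k, ~ fault p.1 k i.
Definition Aset : indexical := fun p i => forall k, k < p.2 -> ~ fault p.1 k i.

Definition Kn (i : 'I_n) (phi : formula) : formula := fun p =>
  forall r' m', is_run r' -> lstate i (r', m') = lstate i p -> phi (r', m').

Definition Bel (S : indexical) (i : 'I_n) (phi : formula) : formula :=
  Kn i (fun p => S p i -> phi p).

Definition EB (S : indexical) (phi : formula) : formula := fun p =>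
  forall i, S p i -> Bel S i phi p.

Definition Eall (S : indexical) (phi : formula) : formula := fun p =>
  forall i, S p i -> Kn i phi p.

Fixpoint iterF (F : formula -> formula) (k : nat) (phi : formula) : formula :=
  match k with 0 => phi | k'.+1 => F (iterF F k' phi) end.

Definition CB (S : indexical) (phi : formula) : formula := fun p =>
  forall k, 0 < k -> iterF (EB S) k phi p.

Definition CK (S : indexical) (phi : formula) : formula := fun p =>
  forall k, 0 < k -> iterF (Eall S) k phi p.

Definition decides (i : 'I_n) (v : V) : formula := fun p =>
  P i (lstate i p) = decide v.

Definition decidesS (S : indexical) (v : V) : formula := fun p =>
  forall i, S p i -> decides i v p.

Definition SBA_N_valid : Prop :=
  forall r, is_run r ->
    (forall i m m' v v', decides i v (r, m) -> decides i v' (r, m') -> m = m') /\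
    (forall i m v, Nset (r, m) i -> decides i v (r, m) ->
       (forall j, Nset (r, m) j -> decides j v (r, m)) /\
       exists j, init E j ((r 0).2 j) = v).

End System.

(* Main.v *)
Require Import Defs.
From mathcomp Require Import all_boot.
From Stdlib Require Import FunctionalExtensionality.
Set Implicit Arguments. Unset Strict Implicit.

Section S.
Variables (n t : nat) (V : Type) (E : InfoExchange n V)
          (P : 'I_n -> lst E -> action V)
          (Le : Type) (Ie : Le -> Prop) (de : Le -> ('I_n -> action V) -> Le).

Local Notation isrun := (is_run n t V E P Le Ie de).
Local Notation A := (Aset n V E P Le).
Local Notation N := (Nset n V E P Le).
Local Notation flt := (fault n V E P Le).
Local Notation stp := (step n V E P Le de).
Local Notation ls := (lstate n V E Le).
Local Notation pt := (point n V E Le).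

Lemma adv_const r : isrun r -> forall k, (r k).1.2 = (r 0).1.2.
Proof. move=> [_ _ _ Hs]; elim=> // k IH; by rewrite Hs /= IH. Qed.

Lemma noncrash r i k : isrun r ->
  (forall k' s, k' < k -> ds (r 0).1.2 i k' s = s) -> (r k).2 i <> crashed E.
Proof.
move=> Hr; have [H0 _ Hi Hs] := Hr.
elim: k => [|k IH] H.
  by have [] := @initial_ok _ _ E i _ (Hi i).
rewrite Hs /= (adv_const Hr k) H //.
have Hnc : (r k).2 i <> crashed E by apply: IH => k' s hk; apply: H; apply: ltnW.
by have [] := @delta_ok _ _ E i _ (acts n V E P Le (r k) i) (fun j => recv n V E P Le k (r k) j i) Hnc.
Qed.

Lemma nofault r k x : isrun r ->
  (forall j m, dt (r 0).1.2 k x j m = m) -> (forall s, ds (r 0).1.2 x k s = s) ->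
  ~ flt r k x.
Proof.
move=> Hr Hdt Hds; have [_ [Hdr _] _ _] := Hr.
rewrite /fault (adv_const Hr k) Hds.
case=> [[j]|[[j]|]] //; by rewrite ?Hdt ?Hdr.
Qed.

Lemma crashfault r i k0 : isrun r ->
  (forall k' s, k' < k0 -> ds (r 0).1.2 i k' s = s) ->
  (forall k' s, k0 <= k' -> ds (r 0).1.2 i k' s = crashed E) -> flt r k0 i.
Proof.
move=> Hr H1 H2; right; right.
rewrite (adv_const Hr k0) H2 // => /esym.
have Hnc := noncrash Hr H1.
by have [] := @delta_ok _ _ E i _ (acts n V E P Le (r k0) i) (fun j => recv n V E P Le k0 (r k0) j i) Hnc.
Qed.

Lemma crashedafter r i k0 k : isrun r ->
  (forall k' s, k0 <= k' -> ds (r 0).1.2 i k' s = crashed E) -> k0 < k ->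
  (r k).2 i = crashed E.
Proof.
move=> Hr H2; case: k => // k hk; have [_ _ _ Hs] := Hr.
by rewrite Hs /= (adv_const Hr k) H2.
Qed.

Lemma Achar r m i : isrun r -> A (r, m) i <-> (r m).2 i <> crashed E.
Proof.
move=> Hr; have [_ [Hdr [C [_ HC]]] _ _] := Hr.
move: (HC i); case: (i \in C).
- case=> k0 [J [h1 h2 h3 h4 h5]]; split.
  + move=> HA; case: (leqP m k0) => hm.
      apply: noncrash => // k' s hk; apply: h1; exact: leq_trans hk hm.
    by case: (HA k0 hm); apply: crashfault.
  + move=> Hnc k /= hk.
    have hm : m <= k0.
      case: (leqP m k0) => // hm; by case: Hnc; apply: crashedafter h2 hm.
    apply: nofault => //; [move=> j mm; apply: h3 | move=> s; apply: h1];
      exact: leq_trans hk hm.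
- case=> h1 h2; split.
  + by move=> _; apply: noncrash.
  + by move=> _ k _; apply: nofault.
Qed.


Lemma Nnonempty r m : t < n -> isrun r -> exists j, N (r, m) j.
Proof.
move=> tn Hr; have [_ [Hdr [C [HCt HC]]] _ _] := Hr.
case: (pickP [pred j | j \notin C]) => [j /= hj|H].
  exists j => k; move: (HC j); rewrite (negbTE hj) => -[h1 h2].
  by apply: nofault.
have : [set: 'I_n] \subset C by apply/subsetP => x _; move: (H x) => /= /negbFE.
move/subset_leq_card; rewrite cardsT card_ord => h.
by move: (leq_trans h HCt); rewrite leqNgt tn.
Qed.

Fixpoint runfrom (g0 : gstate n V E Le) (k : nat) : gstate n V E Le :=
  match k with 0 => g0 | k'.+1 => stp k' (runfrom g0 k') end.

Lemma uncrash r m i : isrun r -> A (r, m) i ->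
  exists r', [/\ isrun r', N (r', m) i, (r' m).2 = (r m).2 &
             forall j, N (r, m) j -> N (r', m) j].
Proof.
move=> Hr HA; have [H0 [Hdr [C [HCt HC]]] Hi Hs] := Hr.
set a := (r 0).1.2.
have NC : forall j, N (r, m) j -> j \notin C.
  move=> j Hj; apply/negP => jC; move: (HC j); rewrite jC => -[k0 [J [h1 h2 _ _ _]]].
  by apply: (Hj k0); apply: crashfault.
case iC: (i \in C); last first.
  exists r; split => //; move=> k; move: (HC i); rewrite iC => -[h1 h2].
  by apply: nofault.
move: (HC i); rewrite iC => -[k0 [J [h1 h2 h3 h4 h5]]].
have hm : m <= k0.
  case: (leqP m k0) => // hm; by case: (HA k0 hm); apply: crashfault.
pose a' : adv n V E := {| dt := fun k x j msg => if x == i then msg else dt a k x j msg;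
                         dr := dr a;
                         ds := fun x k s => if x == i then s else ds a x k s |}.
pose r' := runfrom (((r 0).1.1, a'), (r 0).2).
have Hr' : isrun r'.
  split => //=; split => //.
  exists (C :\ i); split.
    by apply: leq_trans HCt; apply: subset_leq_card; apply: subsetDl.
  move=> x; rewrite in_setD1 /=.
  case: (eqVneq x i) => [->|hx] /=; first by split.
  exact: HC x.
have Ha' : (r' 0).1.2 = a' by [].
have agree : forall k, k <= m -> (r' k).1.1 = (r k).1.1 /\ (r' k).2 = (r k).2.
  elim=> [|k IH] hk; first by [].
  have [IH1 IH2] := IH (ltnW hk).
  have hk0 : k < k0 by apply: leq_trans hk hm.
  rewrite Hs /=; split.
    by rewrite /acts IH1 IH2.
  apply: functional_extensionality => j.
  rewrite (adv_const Hr' k) (adv_const Hr k) Ha' /=.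
  have -> : sstar n V E P Le k (r' k) j = sstar n V E P Le k (r k) j.
    rewrite /sstar /recv /sent /acts IH2 (adv_const Hr' k) (adv_const Hr k) Ha' /=.
    congr (delta _ _ _ _); apply: functional_extensionality => x.
    by case: (eqVneq x i) => [->|] //=; rewrite h3.
  by case: (eqVneq j i) => [->|] //=; rewrite h1.
exists r'; split => //.
- move=> k; apply: nofault => //; rewrite Ha' /=; by rewrite eqxx.
- by have [] := agree m (leqnn m).
- move=> j Hj k; apply: nofault => //; rewrite Ha' /=;
  move: (HC j); rewrite (negbTE (NC j Hj)) => -[g1 g2];
  case: (j == i) => //.
Qed.


Definition stepE (S : indexical n V E Le) (p q : pt) :=
  exists i, S p i /\ isrun q.1 /\ ls i q = ls i p.
Definition stepB (S : indexical n V E Le) (p q : pt) :=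
  exists i, [/\ S p i, S q i, isrun q.1 & ls i q = ls i p].
Fixpoint path (R : pt -> pt -> Prop) k p q :=
  match k with 0 => q = p | k'.+1 => exists p', R p p' /\ path R k' p' q end.

Lemma path_cat R a b p q s : path R a p q -> path R b q s -> path R (a + b) p s.
Proof.
elim: a p => [|a IH] p /=; first by move=> ->.
by move=> [p' [h1 h2]] h3; exists p'; split => //; apply: IH h3.
Qed.

Lemma path_mono (R R' : pt -> pt -> Prop) k p q :
  (forall x y, R x y -> R' x y) -> path R k p q -> path R' k p q.
Proof.
move=> HR; elim: k p => [|k IH] p //= [p' [h1 h2]].
by exists p'; split; [apply: HR | apply: IH].
Qed.

Lemma path_run (R : pt -> pt -> Prop) k p q :
  (forall x y, R x y -> isrun y.1) -> path R k.+1 p q -> isrun q.1.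
Proof.
move=> HR; elim: k p => [|k IH] p /= [p' [h1 h2]]; first by rewrite h2; apply: HR h1.
exact: IH h2.
Qed.

Lemma iterE_path S phi k p :
  iterF n V E Le (Eall n t V E P Le Ie de S) k phi p <-> forall q, path (stepE S) k p q -> phi q.
Proof.
elim: k p => [|k IH] p /=.
  by split; [move=> h q -> | move=> h; apply: h].
split.
  move=> h q [[r' m'] [[i [Si [Hr Heq]]] Hp]].
  by have /IH := h i Si r' m' Hr Heq; apply.
move=> h i Si r' m' Hr Heq; apply/IH => q Hq; apply: h.
by exists (r', m'); split => //; exists i.
Qed.

Lemma iterB_path S phi k p :
  iterF n V E Le (EB n t V E P Le Ie de S) k phi p <-> forall q, path (stepB S) k p q -> phi q.
Proof.
elim: k p => [|k IH] p /=.
  by split; [move=> h q -> | move=> h; apply: h].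
split.
  move=> h q [[r' m'] [[i [Si Si' Hr Heq]] Hp]].
  by have /IH := h i Si r' m' Hr Heq Si'; apply.
move=> h i Si r' m' Hr Heq Si'; apply/IH => q Hq; apply: h.
by exists (r', m'); split => //; exists i.
Qed.

Lemma NA p i : N p i -> A p i.
Proof. by move=> h k _; apply: h. Qed.

Lemma stepB_same r r' m : t < n -> isrun r -> isrun r' -> (r' m).2 = (r m).2 ->
  (forall j, N (r, m) j -> N (r', m) j) -> stepB N (r, m) (r', m).
Proof.
move=> tn Hr Hr' Heq Hinc; have [j Hj] := Nnonempty m tn Hr.
exists j; split => //; [exact: Hinc | by rewrite /lstate /= Heq].
Qed.

Lemma stepB_same' r r' m : t < n -> isrun r -> isrun r' -> (r' m).2 = (r m).2 ->
  (forall j, N (r, m) j -> N (r', m) j) -> stepB N (r', m) (r, m).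
Proof.
move=> tn Hr Hr' Heq Hinc; have [j Hj] := Nnonempty m tn Hr.
exists j; split => //; [exact: Hinc | by rewrite /lstate /= Heq].
Qed.

Lemma three_step r m q : t < n -> isrun r -> stepE A (r, m) q ->
  path (stepB N) 3 (r, m) q.
Proof.
move=> tn Hr; case: q => r1 m1 [i [Ai [Hr1 Heq]]].
have [r' [Hr' Ni Eq' Inc]] := uncrash Hr Ai.
have Ai1 : A (r1, m1) i.
  apply/(Achar _ _ Hr1); move: Heq; rewrite /lstate /= => ->; exact/(Achar _ _ Hr).
have [r1' [Hr1' Ni1 Eq1 Inc1]] := uncrash Hr1 Ai1.
exists (r', m); split; first by apply: stepB_same.
exists (r1', m1); split.
  by exists i; split => //; rewrite /lstate /= Eq1 Eq'; exact: Heq.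
by exists (r1, m1); split => //; apply: stepB_same'.
Qed.

Lemma reachN k p q : t < n -> isrun p.1 -> path (stepE A) k.+1 p q ->
  exists k', path (stepB N) k'.+1 p q.
Proof.
move=> tn; elim: k p => [|k IH] [r m] Hr /= [p1 [Hs Hp]].
  by exists 2; rewrite Hp; apply: three_step.
have Hr1 : isrun p1.1 by case: Hs => i [_ []].
have [k' Hk'] := IH p1 Hr1 Hp.
by exists (3 + k'); apply: (path_cat (three_step tn Hr Hs) Hk').
Qed.


Local Notation CKA := (CK n t V E P Le Ie de A).
Local Notation CBN := (CB n t V E P Le Ie de N).

Lemma part1 r m v : t < n -> isrun r ->
  CKA (decidesS n V E P Le A v) (r, m) <-> CBN (decidesS n V E P Le N v) (r, m).
Proof.
move=> tn Hr; split.
- move=> h k hk; apply/iterB_path => q Hq j Nj.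
  apply: ((iterE_path _ _ _ _).1 (h k hk) q _ j (NA Nj)).
  apply: path_mono Hq => x y [i [a1 a2 a3 a4]]; exists i; split; [exact: NA|].
  by split.
- move=> h k hk; apply/iterE_path => q Hq j Aj.
  case: k hk Hq => // k _ Hq.
  have [k' Hk'] := reachN tn (Hr : isrun (r, m).1) Hq.
  have Hrq : isrun q.1 by apply: path_run Hq => x y [i [_ []]].
  case: q Hq Hk' Hrq Aj => r1 m1 Hq Hk' Hrq Aj.
  have [r1' [Hr1' Nj Eq Inc]] := uncrash Hrq Aj.
  have Hs := stepB_same tn Hrq Hr1' Eq Inc.
  have Hp : path (stepB N) (k'.+1 + 1) (r, m) (r1', m1).
    by apply: (path_cat Hk'); exists (r1', m1); split.
  have hk1 : 0 < k'.+1 + 1 by rewrite addn1.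
  have := (iterB_path _ _ _ _).1 (h _ hk1) _ Hp j Nj.
  by rewrite /decides /lstate /= Eq.
Qed.

Lemma transfer r r' m phi : isrun r -> isrun r' -> (r' m).2 = (r m).2 ->
  CKA phi (r', m) -> CKA phi (r, m).
Proof.
move=> Hr Hr' Heq h k hk; apply/iterE_path => q.
case: k hk => // k _ [p1 [[j [Aj [Hr1 Heq1]]] Hp]].
apply: ((iterE_path _ _ _ _).1 (h k.+1 isT) q); exists p1; split => //.
exists j; split.
  apply/(Achar _ _ Hr'); rewrite Heq; exact/(Achar _ _ Hr).
by split => //; rewrite Heq1 /lstate /= Heq.
Qed.

End S.
Theorem proposition9 (n t : nat) (V : Type) (E : InfoExchange n V)
  (P : 'I_n -> lst E -> action V)
  (Le : Type) (Ie : Le -> Prop) (de : Le -> ('I_n -> action V) -> Le) :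
  t < n ->
  (forall i, P i (crashed E) = noop) ->
  SBA_N_valid n t V E P Le Ie de ->
  forall (i : 'I_n) (v : V),
    valid n t V E P Le Ie de (fun p =>
      CK n t V E P Le Ie de (Aset n V E P Le) (decidesS n V E P Le (Aset n V E P Le) v) p
      <-> CB n t V E P Le Ie de (Nset n V E P Le) (decidesS n V E P Le (Nset n V E P Le) v) p)
    /\
    valid n t V E P Le Ie de (fun p =>
      Aset n V E P Le p i ->
      (Kn n t V E P Le Ie de i
         (CK n t V E P Le Ie de (Aset n V E P Le) (decidesS n V E P Le (Aset n V E P Le) v)) p
       <-> Bel n t V E P Le Ie de (Nset n V E P Le) i
         (CB n t V E P Le Ie de (Nset n V E P Le) (decidesS n V E P Le (Nset n V E P Le) v)) p)).
Proof.
move=> tn Pc SBA i v; split.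
- move=> r m Hr; exact: part1 tn Hr.
- move=> r m Hr Ai; split.
  + move=> h r1 m1 Hr1 Heq Ni.
    by apply/(part1 _ _ tn Hr1); apply: h.
  + move=> h r1 m1 Hr1 Heq.
    have Ai1 : Aset n V E P Le (r1, m1) i.
      apply/(Achar _ _ Hr1); move: Heq; rewrite /lstate /= => ->; exact/(Achar _ _ Hr).
    have [r1p [Hr1p Ni Eq Inc]] := uncrash Hr1 Ai1.
    apply: (transfer Hr1 Hr1p Eq).
    apply/(part1 _ _ tn Hr1p); apply: h => //.
    by rewrite /lstate /= Eq.
Qed.
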